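(* Fix a leader policy $\pi$ and arbitrary functions $\tilde Q_h:\mathcal S\times\mathcal B\to\mathbb R$, $h\in[H]$. Define $\tilde V_h(s)=\eta^{-1}\log\sum_{b\in\mathcal B}\exp(\eta\tilde Q_h(s,b))$, $\tilde A_h=\tilde Q_h-\tilde V_h$, $\tilde\nu_h(b\mid s)=\exp(\eta\tilde A_h(s,b))$, $\tilde V_{H+1}=0$, and $$\tilde\Delta_h^{(1)}(s_h,b_h)=(\mathbb E_{s_h,b_h}-\mathbb E_{s_h})\Bigl[\sum_{l=h}^H\gamma^{l-h}\bigl(\tilde Q_l-r_l^\pi-\gamma P_l^\pi\tilde V_{l+1}\bigr)(s_l,b_l)\Bigr].$$ Then $$\sum_{h=1}^HH\,\mathbb E\bigl[\|\tilde\nu_h(\cdot\mid s_h)-\nu_h^\pi(\cdot\mid s_h)\|_1\bigr]\le C^{(0)}\sum_{h=1}^H\mathbb E\bigl[|\tilde\Delta_h^{(1)}(s_h,b_h)|\bigr]+C^{(1)}\sum_{h=1}^H\mathbb E\bigl[|(\tilde A_h-A_h^\pi)(s_h,b_h)|^2\bigr]$$ and $$\sum_{h=1}^HH\,\mathbb E\bigl[\|\tilde\nu_h(\cdot\mid s_h)-\nu_h^\pi(\cdot\mid s_h)\|_1\bigr]\le C^{(0)}\sum_{h=1}^H\mathbb E\bigl[|\tilde\Delta_h^{(1)}(s_h,b_h)|\bigr]+C^{(2)}\max_{h\in[H]}\mathbb E\bigl[|(\tilde Q_h-r_h^\pi-\gamma P_h^\pi\tilde V_{h+1})(s_h,b_h)|^2\bigr],$$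 where $C^{(0)}=2\eta H$, $C^{(1)}=\eta^2H(1+4\,\mathrm{eff}_H(\gamma))e^{2\eta B_A}$, $C^{(2)}=2\eta^2H^2e^{6\eta B_A}(1+4\,\mathrm{eff}_H(\gamma))\,\mathrm{eff}_H(e^{2\eta B_A}\gamma)^2$.
   Context: Episodic leader–follower Markov game (true model): state space $\mathcal S$, action sets $\mathcal A,\mathcal B$, horizon $H$, transitions $P_h(\cdot\mid s,a,b)$, follower rewards $r_h\in[0,1]$. Leader policy $\pi_h(\cdot\mid s,b)\in\Delta(\mathcal A)$; $r_h^\pi(s,b)=\sum_a\pi_h(a\mid s,b)r_h(s,a,b)$, $P_h^\pi(s'\mid s,b)=\sum_a\pi_h(a\mid s,b)P_h(s'\mid s,a,b)$, $(P_h^\pi f)(s,b)=\mathbb E_{s'\sim P_h^\pi(\cdot\mid s,b)}f(s')$. With $\eta>0$, $\gamma\in[0,1]$: $V_{H+1}^\pi=0$, $Q_h^\pi=r_h^\pi+\gamma P_h^\pi V_{h+1}^\pi$, $V_h^\pi(s)=\eta^{-1}\log\sum_b e^{\eta Q_h^\pi(s,b)}$, $A_h^\pi=Q_h^\pi-V_h^\pi$, quantal response $\nu_h^\pi(b\mid s)=\exp(\eta A_h^\pi(s,b))$. $\mathbb E$ is over a trajectory of $(\pi,\nu^\pi)$ (with $b_h\sim\nu_h^\pi(\cdot\mid s_h)$, $a_h\sim\pi_h(\cdot\mid s_h,b_h)$, $s_{h+1}\sim P_h$); $\mathbb E_{s_h}$, $\mathbb E_{s_h,b_h}$ are the conditional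 expectations given $s_h$, resp. $(s_h,b_h)$. $\mathrm{eff}_H(x)=(1-x^H)/(1-x)$ ($=H$ if $x=1$). Standing assumption: $B_A>0$ is a constant bounding in absolute value all follower advantage, $Q$- and $V$-functions considered, both the true ones and the estimated ones $\tilde Q_h,\tilde V_h,\tilde A_h$ (the paper's value for the true functions is $B_A=(1+\mathrm{eff}_H(\gamma))(\eta^{-1}\log|\mathcal B|+1)$). *)

(* Defs.v *)
From HB Require Import structures.
From mathcomp Require Import all_boot all_order all_algebra.
From mathcomp Require Import all_classical all_reals all_analysis.
Set Implicit Arguments. Unset Strict Implicit. Unset Printing Implicit Defensive.
Import Order.TTheory GRing.Theory Num.Theory.
Local Open Scope ring_scope.

(* Steps are 0-indexed: h = 0, ..., H-1 (paper: 1, ..., H).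
   V at index H (paper: H+1) is 0. *)
Section LeaderFollower.
Variables (R : realType) (S A B : finType) (H : nat) (eta gamma : R).
(* P h s a b s' = P_h(s' | s, a, b) *)
Variable P : nat -> S -> A -> B -> S -> R.
Variable r : nat -> S -> A -> B -> R.
(* pi h s b a = pi_h(a | s, b) *)
Variable pi : nat -> S -> B -> A -> R.
Variable rho : S -> R.

Definition lse (f : B -> R) : R := eta^-1 * ln (\sum_b expR (eta * f b)).

Definition rpi h s b : R := \sum_a pi h s b a * r h s a b.
Definition Ppi h s b s' : R := \sum_a pi h s b a * P h s a b s'.
Definition Pop h (f : S -> R) s b : R := \sum_s' Ppi h s b s' * f s'.

(* Vrem n = V^pi at step H - n (n remaining steps) *)
Fixpoint Vrem (n : nat) (s : S) : R :=
  match n with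
  | 0 => 0
  | n'.+1 => lse (fun b => rpi (H - n'.+1) s b + gamma * Pop (H - n'.+1) (Vrem n') s b)
  end.

Definition Vpi h s : R := Vrem (H - h) s.
Definition Qpi h s b : R := rpi h s b + gamma * Pop h (Vpi h.+1) s b.
Definition Api h s b : R := Qpi h s b - Vpi h s.
Definition nupi h s b : R := expR (eta * Api h s b).

(* marginal law of s_h along a trajectory of (pi, nu^pi) *)
Fixpoint dpi (h : nat) : S -> R :=
  match h with
  | 0 => rho
  | h'.+1 => fun s' => \sum_s dpi h' s * \sum_b nupi h' s b * Ppi h' s b s'
  end.

Definition Esb h (f : S -> B -> R) : R := \sum_s dpi h s * \sum_b nupi h s b * f s b.
Definition Es h (f : S -> R) : R := \sum_s dpi h s * f s.

(* condsb k h f s b = E_{s_h = s, b_h = b}[ f(s_{h+k}, b_{h+k}) ] *)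
Fixpoint condsb (k h : nat) (f : S -> B -> R) (s : S) (b : B) : R :=
  match k with
  | 0 => f s b
  | k'.+1 => \sum_s' Ppi h s b s' *
               \sum_b' nupi h.+1 s' b' * condsb k' h.+1 f s' b'
  end.
Definition conds (k h : nat) (f : S -> B -> R) (s : S) : R :=
  \sum_b nupi h s b * condsb k h f s b.

Definition Vt (Qt : nat -> S -> B -> R) h s : R := if (h < H)%N then lse (Qt h s) else 0.
Definition At (Qt : nat -> S -> B -> R) h s b : R := Qt h s b - Vt Qt h s.
Definition nut (Qt : nat -> S -> B -> R) h s b : R := expR (eta * At Qt h s b).

Definition gres (Qt : nat -> S -> B -> R) h s b : R :=
  Qt h s b - rpi h s b - gamma * Pop h (Vt Qt h.+1) s b.

Definition Delta1 (Qt : nat -> S -> B -> R) h s b : R :=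
  \sum_(h <= l < H) gamma ^+ (l - h) *
     (condsb (l - h) h (gres Qt l) s b - conds (l - h) h (gres Qt l) s).

End LeaderFollower.

Definition eff {R : realType} (n : nat) (x : R) : R :=
  if x == 1 then n%:R else (1 - x ^+ n) / (1 - x).

(* Main.v *)
Require Import Defs.
From HB Require Import structures.
From mathcomp Require Import all_boot all_order all_algebra.
From mathcomp Require Import all_classical all_reals all_analysis.
Import Order.TTheory GRing.Theory Num.Theory.
Local Open Scope ring_scope.

From mathcomp Require Import ring lra zify.

Module TaylorExp.
Import numFieldNormedType.Exports.
Lemma psi_derive (R : realType) (K x : R) :
  is_derive x 1 (fun y : R => K / 2 * y ^+ 2 - (expR y - 1 - y)) (K * x - (expR x - 1)).
Proof.
apply: is_derive_eq.
by rewrite /= subr0 /GRing.scale /=; field.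
Qed.



Lemma taylor_exp (R : realType) (c y : R) : `|y| <= c ->
  0 <= expR y - 1 - y <= expR c / 2 * y ^+ 2.
Proof.
move=> hy.
have K1 : 1 <= expR c by rewrite -expR0 ler_expR (le_trans _ hy).
apply/andP; split; first by rewrite subr_ge0 lerBrDr addrC expR_ge1Dx.
set K := expR c.
pose psi := fun y : R => K / 2 * y ^+ 2 - (expR y - 1 - y).
suff : 0 <= psi y by rewrite subr_ge0.
have psi0 : psi 0 = 0 by rewrite /psi expR0 expr0n /= mulr0; lra.
have cpsi : continuous (psi : R -> R).
  move=> x; apply/differentiable_continuous.
  apply/derivable1_diffP; apply: ex_derive; exact: psi_derive.
have [y0|y0|->] := ltgtP y 0; last by rewrite psi0.
- have [] := @MVT R psi (fun x => K * x - (expR x - 1)) y 0 y0 (fun x _ => psi_derive _ K x).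
    exact: continuous_subspaceT cpsi.
  move=> xi; rewrite in_itv/= => /andP[yx x0].
  rewrite psi0 sub0r => E.
  have hF : K * xi - (expR xi - 1) <= 0.
    have h : (K - 1) * xi <= 0 by rewrite mulr_ge0_le0 ?subr_ge0 // ltW.
    have := expR_ge1Dx xi; lra.
  by rewrite -[psi y]opprK E oppr_ge0 mulr_le0_ge0 // sub0r oppr_ge0 ltW.
- have [] := @MVT R psi (fun x => K * x - (expR x - 1)) 0 y y0 (fun x _ => psi_derive _ K x).
    exact: continuous_subspaceT cpsi.
  move=> xi; rewrite in_itv/= => /andP[x0 xy].
  rewrite psi0 subr0 => ->.
  rewrite mulr_ge0 ?subr0 ?(ltW y0) //.
  have h1 := expR_ge1Dx (- xi).
  have h2 : expR xi * expR (- xi) = 1 by rewrite expRxMexpNx_1.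
  have h3 : expR xi <= K by rewrite ler_expR (le_trans _ hy)// ger0_norm ?(ltW y0)// ltW.
  have h4 : 0 < expR xi := expR_gt0 xi.
  nra.
Qed.

End TaylorExp.
Import TaylorExp.

Lemma cs_ineq (R : realFieldType) (I : Type) (r : seq I) (w a : I -> R) :
  (forall i, 0 <= w i) ->
  (\sum_(i <- r) w i * a i) ^+ 2 <= (\sum_(i <- r) w i) * \sum_(i <- r) w i * a i ^+ 2.
Proof.
move=> w0.
set T := \sum_(i <- r) \sum_(j <- r) w i * w j * (a j ^+ 2 - a i * a j).
have E1 : T = (\sum_(i <- r) w i) * (\sum_(i <- r) w i * a i ^+ 2)
              - (\sum_(i <- r) w i * a i) ^+ 2.
  rewrite /T expr2 !mulr_suml -sumrB; apply: eq_bigr => i _.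
  rewrite !mulr_sumr -sumrB; apply: eq_bigr => j _; ring.
have E2 : T = \sum_(i <- r) \sum_(j <- r) w i * w j * (a i ^+ 2 - a i * a j).
  rewrite /T exchange_big; apply: eq_bigr => i _; apply: eq_bigr => j _; ring.
have : 0 <= T + T.
  rewrite {1}E2 /T -big_split sumr_ge0 // => i _.
  rewrite -big_split /= sumr_ge0 // => j _.
  rewrite /=. have -> : w i * w j * (a i ^+ 2 - a i * a j) + w i * w j * (a j ^+ 2 - a i * a j)
    = w i * w j * (a i - a j) ^+ 2 by ring.
  by apply: mulr_ge0; [exact: mulr_ge0 | exact: sqr_ge0].
lra.
Qed.

Lemma jensen_sq (R : realFieldType) (I : finType) (p a : I -> R) :
  (forall i, 0 <= p i) -> \sum_i p i = 1 ->
  (\sum_i p i * a i) ^+ 2 <= \sum_i p i * a i ^+ 2.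
Proof. by move=> p0 p1; have := @cs_ineq _ _ (index_enum I) p a p0; rewrite p1 mul1r. Qed.

Lemma effE (R : realType) (n : nat) (x : R) : eff n x = \sum_(i < n) x ^+ i.
Proof.
rewrite /eff; case: eqP => [->|/eqP x1].
  by under eq_bigr do rewrite expr1n; rewrite sumr_const card_ord.
have hx : 1 - x != 0 by rewrite subr_eq0 eq_sym.
apply: (mulfI hx); rewrite mulrC divfK //.
have := subrX1 x n; rewrite -[1 - x]opprB mulNr => <-; ring.
Qed.

Lemma dsum (R : realFieldType) (g : R) (a : nat -> R) (n : nat) :
  0 <= g -> (forall l, (l < n)%N -> 0 <= a l) ->
  \sum_(0 <= h < n) \sum_(h <= l < n) g ^+ (l - h) * a l
    <= (\sum_(i < n) g ^+ i) * \sum_(0 <= l < n) a l.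
Proof.
elim: n => [|n IH] g0 a0; first by rewrite !big_geq // big_ord0 mul0r.
have {}IH := IH g0 (fun l hl => a0 l (ltnW hl)).

rewrite (@eq_big_nat _ _ _ 0 n.+1 _
   (fun h => \sum_(h <= l < n) g ^+ (l - h) * a l + g ^+ (n - h) * a n)); last first.
  by move=> h /andP[_ hn]; rewrite big_nat_recr.
rewrite big_split /= big_nat_recr //=.
rewrite [X in _ + X + _](big_geq (leqnn n)) addr0.
have -> : \sum_(0 <= i < n.+1) g ^+ (n - i) * a n = (\sum_(i < n.+1) g ^+ i) * a n.
  rewrite -mulr_suml big_nat_rev /= big_mkord; congr (_ * _).
  apply: eq_bigr => i _; congr (_ ^+ _); have := ltn_ord i; lia.
rewrite big_nat_recr //= big_ord_recr /=.
have s0 : 0 <= \sum_(0 <= l < n) a l.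
  by rewrite big_nat_cond sumr_ge0 // => l /andP[/andP[_ hl] _]; apply: a0; lia.
have an : 0 <= a n by apply: a0.
have e0 : 0 <= g ^+ n by rewrite exprn_ge0.
have := IH; nra.
Qed.

Arguments taylor_exp {R c y}.
Arguments jensen_sq {R I p a}.

Section Main.
Variables (R : realType) (S A B : finType) (H : nat) (eta gamma : R)
  (P : nat -> S -> A -> B -> S -> R) (r : nat -> S -> A -> B -> R)
  (pi : nat -> S -> B -> A -> R) (rho : S -> R) (Qt : nat -> S -> B -> R)
  (BA : R) (b0 : B).
Hypotheses (eta0 : 0 < eta) (g0 : 0 <= gamma) (g1 : gamma <= 1)
  (P0 : forall h s a b s', (h < H)%N -> 0 <= P h s a b s')
  (P1 : forall h s a b, (h < H)%N -> \sum_s' P h s a b s' = 1)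
  (pi0 : forall h s b a, (h < H)%N -> 0 <= pi h s b a)
  (pi1 : forall h s b, (h < H)%N -> \sum_a pi h s b a = 1)
  (rho0 : forall s, 0 <= rho s) (BA0 : 0 <= BA) (HP : (0 < H)%N)
  (hB : forall h s b, (h < H)%N ->
     `|At H eta Qt h s b| <= BA /\ `|Api H eta gamma P r pi h s b| <= BA).

Local Notation nu := (nupi H eta gamma P r pi).
Local Notation mu := (dpi H eta gamma P r pi rho).
Local Notation PP := (Ppi P pi).
Local Notation cs := (condsb H eta gamma P r pi).
Local Notation cds := (conds H eta gamma P r pi).
Local Notation E := (Esb H eta gamma P r pi rho).
Local Notation Pop' := (Pop P pi).

Definition cc := 2 * eta * BA.
Definition dd h s b := Qt h s b - Qpi H eta gamma P r pi h s b.
Definition ee h s := Vt H eta Qt h s - Vpi H eta gamma P r pi h s.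
Definition xx h s b := At H eta Qt h s b - Api H eta gamma P r pi h s b.
Definition kk h s := ee h s - \sum_b nu h s b * dd h s b.
Definition gg h := gres H eta gamma P r pi Qt h.

Lemma Ppi_ge0 h s b s' : (h < H)%N -> 0 <= PP h s b s'.
Proof. by move=> hh; rewrite /Ppi sumr_ge0 // => a _; rewrite mulr_ge0 ?pi0 ?P0. Qed.

Lemma Ppi_sum h s b : (h < H)%N -> \sum_s' PP h s b s' = 1.
Proof.
move=> hh; rewrite /Ppi exchange_big /= -(pi1 h s b hh); apply: eq_bigr => a _.
by rewrite -mulr_sumr P1 // mulr1.
Qed.

Lemma nu_ge0 h s b : 0 <= nu h s b.
Proof. exact: expR_ge0. Qed.

Lemma softmax_sum (f : B -> R) : \sum_b expR (eta * (f b - lse eta f)) = 1.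
Proof.
set Z := \sum_b expR (eta * f b).
have Z0 : 0 < Z.
  apply: (lt_le_trans (expR_gt0 (eta * f b0))).
  by rewrite /Z (bigD1 b0) //= lerDl sumr_ge0 // => *; exact: expR_ge0.
have -> : \sum_b expR (eta * (f b - lse eta f)) = \sum_b expR (eta * f b) / Z.
  apply: eq_bigr => b _; rewrite mulrBr expRB /lse mulrA mulfV ?gt_eqF // mul1r.
  by rewrite lnK // posrE.
by rewrite -mulr_suml divff // gt_eqF.
Qed.

Lemma Vpi_lse h s : (h < H)%N -> Vpi H eta gamma P r pi h s = lse eta (Qpi H eta gamma P r pi h s).
Proof.
move=> hh; rewrite /Vpi.
have -> : (H - h = (H - h.+1).+1)%N by lia.
rewrite /=.
have -> : (H - (H - h.+1).+1 = h)%N by lia.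
by [].
Qed.

Lemma nu_sum h s : (h < H)%N -> \sum_b nu h s b = 1.
Proof. by move=> hh; rewrite /nupi /Api Vpi_lse //; exact: softmax_sum. Qed.

Lemma nut_sum h s : (h < H)%N -> \sum_b nut H eta Qt h s b = 1.
Proof. by move=> hh; rewrite /nut /At /Vt hh; exact: softmax_sum. Qed.

Lemma nut_nu h s b : nut H eta Qt h s b = nu h s b * expR (eta * xx h s b).
Proof. by rewrite /nut /nupi -expRD; congr expR; rewrite /xx; ring. Qed.

Lemma xx_de h s b : xx h s b = dd h s b - ee h s.
Proof. by rewrite /xx /At /Api /dd /ee; ring. Qed.

Lemma xx_bound h s b : (h < H)%N -> `|eta * xx h s b| <= cc.
Proof.
move=> hh; have [h1 h2] := hB h s b hh.
rewrite normrM gtr0_norm // /cc.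
have : `|xx h s b| <= 2 * BA.
  by rewrite /xx (le_trans (ler_normB _ _)) // mulr2n mulrDl !mul1r lerD.
move=> hx; rewrite [2 * eta]mulrC -mulrA ler_pM2l //.
Qed.

Lemma mu_ge0 h s : (h <= H)%N -> 0 <= mu h s.
Proof.
elim: h s => [|h IH] s hh /=; first exact: rho0.
rewrite sumr_ge0 // => s' _; rewrite mulr_ge0 ?IH ?(ltnW hh) // sumr_ge0 // => b _.
by rewrite mulr_ge0 ?nu_ge0 ?Ppi_ge0.
Qed.


Lemma cc_ge0 : 0 <= cc.
Proof. by rewrite /cc !mulr_ge0 // ltW. Qed.

Lemma ecc_ge1 : 1 <= expR cc.
Proof. by rewrite -expR0 ler_expR cc_ge0. Qed.

Lemma sum_nu_x h s : (h < H)%N -> \sum_b nu h s b * xx h s b = - kk h s.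
Proof.
move=> hh; rewrite /kk.
rewrite (eq_bigr (fun b => nu h s b * dd h s b - nu h s b * ee h s)); last first.
  by move=> b _; rewrite xx_de mulrBr.
rewrite sumrB -mulr_suml (nu_sum h s hh) mul1r; lra.
Qed.

Lemma sum_nu_taylor h s : (h < H)%N ->
  \sum_b nu h s b * (expR (eta * xx h s b) - 1 - eta * xx h s b) = eta * kk h s.
Proof.
move=> hh.
have E1 : \sum_b nu h s b * expR (eta * xx h s b) = 1.
  by rewrite -(nut_sum h s hh); apply: eq_bigr => b _; rewrite nut_nu.
rewrite (eq_bigr (fun b => nu h s b * expR (eta * xx h s b) - nu h s b
   - eta * (nu h s b * xx h s b))); last by move=> b _; ring.
by rewrite !sumrB E1 nu_sum // -mulr_sumr (sum_nu_x h s hh); ring.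
Qed.

Lemma kk_ge0 h s : (h < H)%N -> 0 <= kk h s.
Proof.
move=> hh; have := sum_nu_taylor h s hh.
have : 0 <= \sum_b nu h s b * (expR (eta * xx h s b) - 1 - eta * xx h s b).
  rewrite sumr_ge0 // => b _; rewrite mulr_ge0 ?nu_ge0 //.
  by case/andP: (taylor_exp (xx_bound h s b hh)).
by move=> h0 E; move: h0; rewrite E pmulr_rge0.
Qed.

Lemma kk_le h s : (h < H)%N ->
  kk h s <= eta / 2 * expR cc * \sum_b nu h s b * xx h s b ^+ 2.
Proof.
move=> hh; have E := sum_nu_taylor h s hh.
have : eta * kk h s <= \sum_b nu h s b * (expR cc / 2 * (eta * xx h s b) ^+ 2).
  rewrite -E; apply: ler_sum => b _; rewrite ler_wpM2l ?nu_ge0 //.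
  by case/andP: (taylor_exp (xx_bound h s b hh)).
move=> h1.
have h2 : \sum_b nu h s b * (expR cc / 2 * (eta * xx h s b) ^+ 2) =
   eta * (eta / 2 * expR cc * \sum_b nu h s b * xx h s b ^+ 2).
  rewrite !mulr_sumr; apply: eq_bigr => b _; ring.
by move: h1; rewrite h2 ler_pM2l.
Qed.

Lemma nut_le h s b : (h < H)%N -> nut H eta Qt h s b <= expR cc * nu h s b.
Proof.
move=> hh; rewrite nut_nu mulrC ler_wpM2r ?nu_ge0 // ler_expR.
exact: le_trans (ler_norm _) (xx_bound h s b hh).
Qed.

Lemma abs_ee h s : (h < H)%N ->
  `|ee h s| <= expR cc * \sum_b nu h s b * `|dd h s b|.
Proof.
move=> hh.
have low : \sum_b nu h s b * dd h s b <= ee h s.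
  by have := kk_ge0 h s hh; rewrite /kk subr_ge0.
have up : ee h s <= \sum_b nut H eta Qt h s b * dd h s b.
  have E1 : \sum_b nut H eta Qt h s b * expR (- (eta * xx h s b)) = 1.
    rewrite -(nu_sum h s hh); apply: eq_bigr => b _.
    by rewrite nut_nu -mulrA expRxMexpNx_1 mulr1.
  have : \sum_b nut H eta Qt h s b * (1 - eta * xx h s b) <= 1.
    rewrite -[X in _ <= X]E1; apply: ler_sum => b _.
    by apply: ler_wpM2l; [exact: expR_ge0 | exact: expR_ge1Dx].
  have ex : \sum_b nut H eta Qt h s b * xx h s b =
      \sum_b nut H eta Qt h s b * dd h s b - ee h s.
    rewrite (eq_bigr (fun b => nut H eta Qt h s b * dd h s b
                              - nut H eta Qt h s b * ee h s)); last first.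
      by move=> b _; rewrite xx_de; ring.
    by rewrite sumrB -mulr_suml (nut_sum h s hh) mul1r.
  have -> : \sum_b nut H eta Qt h s b * (1 - eta * xx h s b) =
     \sum_b nut H eta Qt h s b - eta * (\sum_b nut H eta Qt h s b * xx h s b).
    by rewrite mulr_sumr -sumrB; apply: eq_bigr => b _; ring.
  rewrite ex.
  rewrite (nut_sum h s hh) => h1.
  have : 0 <= eta * (\sum_b nut H eta Qt h s b * dd h s b - ee h s) by lra.
  by rewrite pmulr_rge0 // subr_ge0.
have s1 : \sum_b nut H eta Qt h s b * dd h s b <=
          expR cc * \sum_b nu h s b * `|dd h s b|.
  rewrite mulr_sumr; apply: ler_sum => b _.
  apply: (le_trans (ler_norm _)); rewrite normrM ger0_norm ?expR_ge0 // mulrA.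
  by rewrite ler_wpM2r ?normr_ge0 ?nut_le.
have s2 : - \sum_b nu h s b * `|dd h s b| <= \sum_b nu h s b * dd h s b.
  rewrite -subr_ge0 opprK -big_split sumr_ge0 //= => b _.
  rewrite -mulrDr mulr_ge0 ?nu_ge0 //.
  by rewrite addrC -lerBlDr sub0r -normrN ler_norm.
have s3 : \sum_b nu h s b * `|dd h s b| <= expR cc * \sum_b nu h s b * `|dd h s b|.
  rewrite ler_peMl ?ecc_ge1 // sumr_ge0 // => b _; rewrite mulr_ge0 ?nu_ge0 //.
rewrite ler_norml; apply/andP; split; lra.
Qed.

Lemma cs_add k h f1 f2 s b :
  cs k h (fun s b => f1 s b + f2 s b) s b = cs k h f1 s b + cs k h f2 s b.
Proof.
elim: k h s b => [|k IH] h s b //=.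
rewrite -big_split /=; apply: eq_bigr => s' _; rewrite -mulrDr; congr (_ * _).
by rewrite -big_split /=; apply: eq_bigr => b' _; rewrite IH mulrDr.
Qed.

Lemma cs_le k h f1 f2 s b : (h + k <= H)%N -> (forall s b, f1 s b <= f2 s b) ->
  cs k h f1 s b <= cs k h f2 s b.
Proof.
elim: k h s b => [|k IH] h s b hk hf /=; first exact: hf.
apply: ler_sum => s' _; apply: ler_wpM2l; first by apply: Ppi_ge0; lia.
apply: ler_sum => b' _; apply: ler_wpM2l; first exact: nu_ge0.
by apply: IH => //; lia.
Qed.

Lemma cs_ge0 k h f s b : (h + k <= H)%N -> (forall s b, 0 <= f s b) -> 0 <= cs k h f s b.
Proof.
elim: k h s b => [|k IH] h s b hk hf /=; first exact: hf.
apply: sumr_ge0 => s' _; apply: mulr_ge0; first by apply: Ppi_ge0; lia.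
apply: sumr_ge0 => b' _; apply: mulr_ge0; first exact: nu_ge0.
by apply: IH => //; lia.
Qed.

Lemma cs_abs k h f s b : (h + k <= H)%N ->
  `|cs k h f s b| <= cs k h (fun s b => `|f s b|) s b.
Proof.
elim: k h s b => [|k IH] h s b hk /=; first exact: le_refl.
apply: (le_trans (ler_norm_sum _ _ _)); apply: ler_sum => s' _.
rewrite normrM ger0_norm; last by apply: Ppi_ge0; lia.
apply: ler_wpM2l; first by apply: Ppi_ge0; lia.
apply: (le_trans (ler_norm_sum _ _ _)); apply: ler_sum => b' _.
rewrite normrM ger0_norm ?nu_ge0 //; apply: ler_wpM2l; first exact: nu_ge0.
by apply: IH; lia.
Qed.

Lemma cs_jensen k h f s b : (h + k < H)%N ->
  (cs k h f s b) ^+ 2 <= cs k h (fun s b => f s b ^+ 2) s b.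
Proof.
elim: k h s b => [|k IH] h s b hk /=; first exact: le_refl.
apply: (le_trans (jensen_sq _ _)); [by move=> ?; apply: Ppi_ge0; lia|
   by apply: Ppi_sum; lia|].
apply: ler_sum => s' _; apply: ler_wpM2l; first by apply: Ppi_ge0; lia.
apply: (le_trans (jensen_sq _ _)); [exact: nu_ge0| by apply: nu_sum; lia|].
apply: ler_sum => b' _; apply: ler_wpM2l; first exact: nu_ge0.
by apply: IH; lia.
Qed.

Lemma E_le h F G : (h <= H)%N -> (forall s b, F s b <= G s b) -> E h F <= E h G.
Proof.
move=> hh hF; apply: ler_sum => s _; apply: ler_wpM2l; first exact: mu_ge0.
by apply: ler_sum => b _; apply: ler_wpM2l; [exact: nu_ge0| exact: hF].
Qed.

Lemma E_ge0 h F : (h <= H)%N -> (forall s b, 0 <= F s b) -> 0 <= E h F.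
Proof.
move=> hh hF; apply: sumr_ge0 => s _; apply: mulr_ge0; first exact: mu_ge0.
by apply: sumr_ge0 => b _; apply: mulr_ge0; [exact: nu_ge0| exact: hF].
Qed.

Lemma E_add h F G : E h (fun s b => F s b + G s b) = E h F + E h G.
Proof.
rewrite /Esb -big_split /=; apply: eq_bigr => s _; rewrite -mulrDr; congr (_ * _).
by rewrite -big_split /=; apply: eq_bigr => b _; rewrite mulrDr.
Qed.

Lemma E_scale h (a : R) F : E h (fun s b => a * F s b) = a * E h F.
Proof.
rewrite /Esb mulr_sumr; apply: eq_bigr => s _; rewrite mulrCA; congr (_ * _).
by rewrite mulr_sumr; apply: eq_bigr => b _; rewrite mulrCA.
Qed.

Lemma E_sum (I : Type) (rr : seq I) h (F : I -> S -> B -> R) :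
  E h (fun s b => \sum_(i <- rr) F i s b) = \sum_(i <- rr) E h (F i).
Proof.
rewrite /Esb [RHS]exchange_big; apply: eq_bigr => s _ /=; rewrite -mulr_sumr.
congr (_ * _); rewrite [RHS]exchange_big; apply: eq_bigr => b _.
by rewrite mulr_sumr.
Qed.

Lemma cs_S k h f s b : cs k.+1 h f s b =
  \sum_s' PP h s b s' * \sum_b' nu h.+1 s' b' * cs k h.+1 f s' b'.
Proof. by []. Qed.

Lemma mu_S h s' : mu h.+1 s' = \sum_s mu h s * \sum_b nu h s b * PP h s b s'.
Proof. by []. Qed.

Lemma tower1 k h f : E h (cs k.+1 h f) = E h.+1 (cs k h.+1 f).
Proof.
rewrite /Esb; under eq_bigr do under eq_bigr do rewrite cs_S.
under [RHS]eq_bigr do rewrite mu_S.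
set X := fun s' => \sum_b' nu h.+1 s' b' * cs k h.+1 f s' b'.
transitivity (\sum_s \sum_b \sum_s' mu h s * nu h s b * PP h s b s' * X s').
  apply: eq_bigr => s _; rewrite mulr_sumr; apply: eq_bigr => b _.
  by rewrite mulrA mulr_sumr; apply: eq_bigr => s' _; rewrite mulrA.
rewrite [RHS](eq_bigr (fun s' => \sum_s \sum_b mu h s * nu h s b * PP h s b s' * X s'));
  last first.
  move=> s' _; rewrite mulr_suml; apply: eq_bigr => s _.
  by rewrite -mulrA mulr_suml mulr_sumr; apply: eq_bigr => b _; rewrite /X !mulrA.
by rewrite [RHS]exchange_big; apply: eq_bigr => s _; rewrite [RHS]exchange_big.
Qed.

Lemma tower k h f : E h (cs k h f) = E (h + k) f.
Proof.
elim: k h => [|k IH] h; first by rewrite addn0.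
by rewrite tower1 IH addSnnS.
Qed.

Lemma E_conds k h f : (h < H)%N -> E h (fun s _ => cds k h f s) = E h (cs k h f).
Proof.
move=> hh; rewrite /Esb; apply: eq_bigr => s _; congr (_ * _).
by rewrite -mulr_suml (nu_sum h s hh) mul1r.
Qed.

Lemma E_const h F : (h < H)%N ->
  E h (fun s _ => F s) = Es H eta gamma P r pi rho h F.
Proof.
move=> hh; rewrite /Esb /Es; apply: eq_bigr => s _; congr (_ * _).
by rewrite -mulr_suml (nu_sum h s hh) mul1r.
Qed.

Lemma step_sum (w : R) (F : nat -> S -> B -> R) h s b : (h < H)%N ->
  \sum_(h <= l < H) w ^+ (l - h) * cs (l - h) h (F l) s b =
  F h s b + w * Pop' h (fun s' => \sum_b' nu h.+1 s' b' *
      \sum_(h.+1 <= l < H) w ^+ (l - h.+1) * cs (l - h.+1) h.+1 (F l) s' b') s b.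
Proof.
move=> hh; rewrite big_ltn // subnn expr0 mul1r; congr (_ + _).
transitivity (\sum_(h.+1 <= l < H) w * (\sum_s' PP h s b s' * \sum_b' nu h.+1 s' b'
     * (w ^+ (l - h.+1) * cs (l - h.+1) h.+1 (F l) s' b'))).
  apply: eq_big_nat => l /andP[hl lH].
  have -> : (l - h = (l - h.+1).+1)%N by lia.
  rewrite exprS cs_S -mulrA; congr (_ * _).
  rewrite mulr_sumr; apply: eq_bigr => s' _; rewrite mulrCA; congr (_ * _).
  by rewrite mulr_sumr; apply: eq_bigr => b' _; rewrite mulrCA.
rewrite -mulr_sumr; congr (_ * _); rewrite /Pop.
rewrite exchange_big; apply: eq_bigr => s' _; rewrite -mulr_sumr; congr (_ * _).
by rewrite exchange_big; apply: eq_bigr => b' _; rewrite mulr_sumr.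
Qed.

Lemma Pop_ext h f1 f2 s b : (forall s, f1 s = f2 s) -> Pop' h f1 s b = Pop' h f2 s b.
Proof. by move=> e; rewrite /Pop; apply: eq_bigr => s' _; rewrite e. Qed.

Lemma d_rec h s b : dd h s b = gg h s b + gamma * Pop' h (ee h.+1) s b.
Proof.
rewrite /dd /gg /gres /Qpi.
have -> : Pop' h (ee h.+1) s b = Pop' h (Vt H eta Qt h.+1) s b
      - Pop' h (Vpi H eta gamma P r pi h.+1) s b.
  by rewrite /Pop -sumrB; apply: eq_bigr => s' _; rewrite /ee mulrBr.
ring.
Qed.

Definition Kf l := fun s (_ : B) => kk l s.
Definition GG h s b := \sum_(h <= l < H) gamma ^+ (l - h) *
   cs (l - h) h (fun s b => gg l s b + kk l s) s b.

Lemma e_G_aux n h : (H - h = n)%N -> (h <= H)%N ->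
  forall s, ee h s = \sum_b nu h s b * GG h s b.
Proof.
elim: n h => [|n IH] h hn hh s.
  have eh : h = H by lia.
  rewrite eh /ee /Vt ltnn /Vpi subnn /= subrr big1 // => b _.
  by rewrite /GG big_geq // mulr0.
have hh' : (h < H)%N by lia.
have IH' := IH h.+1 (ltac:(lia)) hh'.
have eG : forall b, GG h s b = dd h s b + kk h s.
  move=> b; rewrite /GG (step_sum _ _ _ _ _ hh') d_rec.
  rewrite (@Pop_ext h _ (ee h.+1)); last by move=> s'; rewrite IH'.
  ring.
rewrite (eq_bigr (fun b => nu h s b * dd h s b + nu h s b * kk h s)); last first.
  by move=> b _; rewrite eG mulrDr.
by rewrite big_split /= -mulr_suml (nu_sum h s hh') mul1r /kk; ring.
Qed.

Lemma d_G h s b : (h < H)%N -> GG h s b = dd h s b + kk h s.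
Proof.
move=> hh; rewrite /GG (step_sum _ _ _ _ _ hh) d_rec.
rewrite (@Pop_ext h _ (ee h.+1)); last first.
  by move=> s'; rewrite (@e_G_aux (H - h.+1) h.+1).
ring.
Qed.

Lemma e_G h s : (h <= H)%N -> ee h s = \sum_b nu h s b * GG h s b.
Proof. by move=> hh; apply: (@e_G_aux (H - h)). Qed.

Lemma x_eq h s b : (h < H)%N ->
  xx h s b = Delta1 H eta gamma P r pi Qt h s b
     + \sum_(h <= l < H) gamma ^+ (l - h) * (cs (l - h) h (Kf l) s b - cds (l - h) h (Kf l) s)
     - kk h s.
Proof.
move=> hh.
have e1 : ee h s = \sum_(h <= l < H) gamma ^+ (l - h) *
   (cds (l - h) h (gg l) s + cds (l - h) h (Kf l) s).
  rewrite (e_G h s (ltnW hh)) /GG.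
  rewrite (eq_bigr (fun b => \sum_(h <= l < H) nu h s b * (gamma ^+ (l - h) *
     (cs (l - h) h (gg l) s b + cs (l - h) h (Kf l) s b)))); last first.
    by move=> b' _; rewrite mulr_sumr; apply: eq_bigr => l _; rewrite cs_add.
  rewrite exchange_big; apply: eq_bigr => l _.
  rewrite /conds -big_split mulr_sumr /=; apply: eq_bigr => b' _; ring.
have gG : GG h s b = \sum_(h <= l < H) gamma ^+ (l - h) *
   (cs (l - h) h (gg l) s b + cs (l - h) h (Kf l) s b).
  by rewrite /GG; apply: eq_bigr => l _; rewrite cs_add.
have : xx h s b = GG h s b - kk h s - ee h s by rewrite xx_de d_G //; ring.
rewrite gG e1 /Delta1 => ->.
set T1 := \sum_(h <= l < H) _ * (_ + _).
set T2 := \sum_(h <= l < H) _ * (cds _ _ _ s + _).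
have key : T1 - T2 = \sum_(h <= l < H) gamma ^+ (l - h) *
   (cs (l - h) h (gres H eta gamma P r pi Qt l) s b
    - cds (l - h) h (gres H eta gamma P r pi Qt l) s) +
  \sum_(h <= l < H) gamma ^+ (l - h) * (cs (l - h) h (Kf l) s b - cds (l - h) h (Kf l) s).
  rewrite /T1 /T2 -sumrB -big_split /=; apply: eq_bigr => l _; rewrite /gg; ring.
lra.
Qed.

Lemma Kf_ge0 l s b : (l < H)%N -> 0 <= Kf l s b.
Proof. by move=> hl; apply: kk_ge0. Qed.

Lemma x_abs h s b : (h < H)%N ->
  `|xx h s b| <= `|Delta1 H eta gamma P r pi Qt h s b|
     + \sum_(h <= l < H) gamma ^+ (l - h) * (cs (l - h) h (Kf l) s b + cds (l - h) h (Kf l) s)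
     + kk h s.
Proof.
move=> hh; rewrite (x_eq h s b hh).
set S1 := \sum_(h <= l < H) _ * (_ - _).
set S2 := \sum_(h <= l < H) _ * (_ + _).
have k0 := kk_ge0 h s hh.
have hS : `|S1| <= S2.
  apply: (le_trans (ler_norm_sum _ _ _)).
  rewrite /S1 /S2 big_nat_cond [X in _ <= X]big_nat_cond.
  apply: ler_sum => l /andP[/andP[hl lH] _].
  rewrite normrM ger0_norm ?exprn_ge0 //; apply: ler_wpM2l; first exact: exprn_ge0.
  have c1 : 0 <= cs (l - h) h (Kf l) s b.
    by apply: cs_ge0 => [|s2 b2]; [lia | apply: Kf_ge0].
  have c2 : 0 <= cds (l - h) h (Kf l) s.
    apply: sumr_ge0 => b' _; apply: mulr_ge0; first exact: nu_ge0.
    by apply: cs_ge0 => [|s2 b2]; [lia | apply: Kf_ge0].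
  by rewrite ler_norml; apply/andP; split; lra.
have t1 := ler_normD (Delta1 H eta gamma P r pi Qt h s b + S1) (- kk h s).
have t2 := ler_normD (Delta1 H eta gamma P r pi Qt h s b) S1.
rewrite normrN (ger0_norm k0) in t1.
lra.
Qed.

Lemma Ex_abs h : (h < H)%N ->
  E h (fun s b => `|xx h s b|) <=
  E h (fun s b => `|Delta1 H eta gamma P r pi Qt h s b|)
  + 2 * \sum_(h <= l < H) gamma ^+ (l - h) * E l (Kf l) + E h (Kf h).
Proof.
move=> hh; apply: le_trans; first by apply: (E_le h _ _ (ltnW hh)) => s b; exact: (x_abs h s b hh).
rewrite (E_add h (fun s b => `|Delta1 H eta gamma P r pi Qt h s b| +
     \sum_(h <= l < H) gamma ^+ (l - h) * (cs (l - h) h (Kf l) s b + cds (l - h) h (Kf l) s))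
   (Kf h)).
rewrite E_add E_sum.
suff -> : \sum_(h <= i < H) E h (fun s b => gamma ^+ (i - h) *
       (cs (i - h) h (Kf i) s b + cds (i - h) h (Kf i) s)) =
  2 * \sum_(h <= l < H) gamma ^+ (l - h) * E l (Kf l) by [].
rewrite mulr_sumr big_nat_cond [RHS]big_nat_cond; apply: eq_bigr => l /andP[/andP[hl lH] _].
rewrite E_scale E_add E_conds // tower subnKC //; ring.
Qed.

Lemma kappa_le l : (l < H)%N ->
  E l (Kf l) <= eta / 2 * expR cc * E l (fun s b => xx l s b ^+ 2).
Proof.
move=> hl; rewrite /Esb mulr_sumr; apply: ler_sum => s _; rewrite mulrCA.
apply: ler_wpM2l; first exact: mu_ge0 (ltnW hl).
rewrite /Kf -mulr_suml (nu_sum l s hl) mul1r; exact: kk_le.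
Qed.

Lemma l1_bound h s : (h < H)%N ->
  \sum_b `|nut H eta Qt h s b - nu h s b| <=
  \sum_b nu h s b * (eta * `|xx h s b| + expR cc / 2 * eta ^+ 2 * xx h s b ^+ 2).
Proof.
move=> hh; apply: ler_sum => b _.
rewrite nut_nu -[X in `|_ - X|](mulr1 (nu h s b)) -mulrBr normrM (ger0_norm (nu_ge0 h s b)).
apply: ler_wpM2l; first exact: nu_ge0.
have /andP[t1 t2] := taylor_exp (xx_bound h s b hh).
have ey : `|eta * xx h s b| = eta * `|xx h s b| by rewrite normrM gtr0_norm.
have ey2 : (eta * xx h s b) ^+ 2 = eta ^+ 2 * xx h s b ^+ 2 by rewrite exprMn.
have n1 := ler_norm (eta * xx h s b).
have n2 : - `|eta * xx h s b| <= eta * xx h s b.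
  by rewrite lerNl -normrN ler_norm.
rewrite ey2 in t2; rewrite ey in n1 n2.
rewrite ler_norml; apply/andP; split; nra.
Qed.

Lemma Es_l1 h : (h < H)%N ->
  Es H eta gamma P r pi rho h (fun s => \sum_b `|nut H eta Qt h s b - nu h s b|) <=
  eta * E h (fun s b => `|xx h s b|) + expR cc / 2 * eta ^+ 2 * E h (fun s b => xx h s b ^+ 2).
Proof.
move=> hh; rewrite -!E_scale -E_add /Es /Esb; apply: ler_sum => s _.
apply: ler_wpM2l; first exact: mu_ge0 (ltnW hh).
exact: l1_bound.
Qed.

Definition DD := \sum_(0 <= h < H) E h (fun s b => `|Delta1 H eta gamma P r pi Qt h s b|).
Definition XX := \sum_(0 <= h < H) E h (fun s b => xx h s b ^+ 2).

Lemma eff_ge0 (x : R) : 0 <= x -> 0 <= eff H x.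
Proof. by move=> x0; rewrite effE sumr_ge0 // => i _; rewrite exprn_ge0. Qed.

Lemma DD_ge0 : 0 <= DD.
Proof.
rewrite /DD big_nat_cond sumr_ge0 // => h /andP[/andP[_ hh] _].
by apply: E_ge0 => [|s b]; [exact: ltnW | exact: normr_ge0].
Qed.

Lemma XX_ge0 : 0 <= XX.
Proof.
rewrite /XX big_nat_cond sumr_ge0 // => h /andP[/andP[_ hh] _].
by apply: E_ge0 => [|s b]; [exact: ltnW | exact: sqr_ge0].
Qed.

Lemma part1 :
  \sum_(0 <= h < H) H%:R * Es H eta gamma P r pi rho h
      (fun s => \sum_b `|nut H eta Qt h s b - nu h s b|)
  <= H%:R * eta * DD + H%:R * eta ^+ 2 * expR cc * (1 + eff H gamma) * XX.
Proof.
set KK := \sum_(0 <= h < H) E h (Kf h).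
have Ka : KK <= eta / 2 * expR cc * XX.
  rewrite /KK /XX mulr_sumr big_nat_cond [X in _ <= X]big_nat_cond.
  by apply: ler_sum => h /andP[/andP[_ hh] _]; apply: kappa_le.
have K0 : 0 <= KK.
  rewrite /KK big_nat_cond sumr_ge0 // => h /andP[/andP[_ hh] _].
  by apply: E_ge0 => [|s b]; [exact: ltnW | exact: Kf_ge0].
have Ea : \sum_(0 <= h < H) E h (fun s b => `|xx h s b|) <= DD + (2 * eff H gamma + 1) * KK.
  apply: le_trans.
    rewrite big_nat_cond; apply: ler_sum => h /andP[/andP[_ hh] _].
    exact: Ex_abs.
  rewrite -big_nat_cond !big_split /= -/DD -mulr_sumr -/KK.
  have := @dsum _ gamma (fun l => E l (Kf l)) H g0.
  move=> /(_ (fun l hl => E_ge0 l (Kf l) (ltnW hl) (fun s b => Kf_ge0 l s b hl))).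
  rewrite -effE -/KK => hd.
  have e0 := eff_ge0 gamma g0.
  lra.
have Eb : \sum_(0 <= h < H) Es H eta gamma P r pi rho h
      (fun s => \sum_b `|nut H eta Qt h s b - nu h s b|) <=
    eta * \sum_(0 <= h < H) E h (fun s b => `|xx h s b|) + expR cc / 2 * eta ^+ 2 * XX.
  rewrite /XX !mulr_sumr -big_split /= big_nat_cond [X in _ <= X]big_nat_cond.
  by apply: ler_sum => h /andP[/andP[_ hh] _]; exact: Es_l1.
rewrite -mulr_sumr.
have H0 : 0 <= H%:R :> R by rewrite ler0n.
have e0 := eff_ge0 gamma g0.
have ec0 : 0 <= expR cc := expR_ge0 _.
have X0 := XX_ge0.
have step1 : eta * \sum_(0 <= h < H) E h (fun s b => `|xx h s b|) <=
     eta * (DD + (2 * eff H gamma + 1) * (eta / 2 * expR cc * XX)).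
  rewrite ler_pM2l //; apply: (le_trans Ea); rewrite lerD2l ler_wpM2l //.
  by rewrite addr_ge0 ?mulr_ge0.
have T : \sum_(0 <= h < H) Es H eta gamma P r pi rho h
      (fun s => \sum_b `|nut H eta Qt h s b - nu h s b|) <=
    eta * (DD + (2 * eff H gamma + 1) * (eta / 2 * expR cc * XX))
    + expR cc / 2 * eta ^+ 2 * XX.
  by apply: (le_trans Eb); rewrite lerD2r.
apply: (le_trans (ler_wpM2l H0 T)).
by rewrite le_eqVlt; apply/orP; left; apply/eqP; field.
Qed.

Definition ww := expR cc * gamma.
Definition ag l := fun s (b : B) => `|gg l s b|.
Definition GH h s b := \sum_(h <= l < H) ww ^+ (l - h) * cs (l - h) h (ag l) s b.

Lemma Pop_abs h f1 f2 s b : (h < H)%N -> (forall s', `|f1 s'| <= f2 s') ->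
  `|Pop' h f1 s b| <= Pop' h f2 s b.
Proof.
move=> hh hf; rewrite /Pop; apply: (le_trans (ler_norm_sum _ _ _)).
apply: ler_sum => s' _; rewrite normrM (ger0_norm (Ppi_ge0 h s b s' hh)).
by apply: ler_wpM2l; [exact: Ppi_ge0 | exact: hf].
Qed.

Lemma Pop_scale h a f s b : Pop' h (fun s' => a * f s') s b = a * Pop' h f s b.
Proof. by rewrite /Pop mulr_sumr; apply: eq_bigr => s' _; rewrite mulrCA. Qed.

Lemma d_hat_step h s b : (h < H)%N ->
  (forall s', `|ee h.+1 s'| <= expR cc * \sum_b' nu h.+1 s' b' * GH h.+1 s' b') ->
  `|dd h s b| <= GH h s b.
Proof.
move=> hh he; rewrite /GH (step_sum _ _ _ _ _ hh) d_rec.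
rewrite /GH in he.
set Z := (fun s' => \sum_b' nu h.+1 s' b' *
  \sum_(h.+1 <= l < H) ww ^+ (l - h.+1) * cs (l - h.+1) h.+1 (ag l) s' b').
set Y := Pop' h Z s b.
have hp : `|Pop' h (ee h.+1) s b| <= expR cc * Y.
  rewrite /Y -Pop_scale; apply: Pop_abs => // s'; exact: he.
have t1 := ler_normD (gg h s b) (gamma * Pop' h (ee h.+1) s b).
rewrite normrM (ger0_norm g0) in t1.
have t2 : gamma * `|Pop' h (ee h.+1) s b| <= gamma * (expR cc * Y) by rewrite ler_wpM2l.
have -> : ww * Y = gamma * (expR cc * Y) by rewrite /ww; ring.
rewrite /ag; lra.
Qed.

Lemma e_hat_aux n h : (H - h = n)%N -> (h <= H)%N ->
  forall s, `|ee h s| <= expR cc * \sum_b nu h s b * GH h s b.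
Proof.
elim: n h => [|n IH] h hn hh s.
  have eh : h = H by lia.
  rewrite eh /ee /Vt ltnn /Vpi subnn /= subrr normr0 big1 ?mulr0 // => b _.
  by rewrite /GH big_geq // mulr0.
have hh' : (h < H)%N by lia.
apply: (le_trans (abs_ee h s hh')); apply: ler_wpM2l; first exact: expR_ge0.
apply: ler_sum => b _; apply: ler_wpM2l; first exact: nu_ge0.
by apply: d_hat_step => // s'; apply: IH => //; lia.
Qed.

Lemma d_hat h s b : (h < H)%N -> `|dd h s b| <= GH h s b.
Proof.
move=> hh; apply: d_hat_step => // s'.
by apply: (@e_hat_aux (H - h.+1)).
Qed.

Lemma x2_le h s : (h < H)%N ->
  \sum_b nu h s b * xx h s b ^+ 2 <= 4 * expR cc ^+ 2 * \sum_b nu h s b * dd h s b ^+ 2.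
Proof.
move=> hh.
set a := \sum_b nu h s b * dd h s b ^+ 2.
set q := \sum_b nu h s b * `|dd h s b|.
have hq : q ^+ 2 <= a.
  rewrite /q /a; apply: (le_trans (jensen_sq (nu_ge0 h s) (nu_sum h s hh))).
  by apply: ler_sum => b _; rewrite real_normK ?num_real.
have a0 : 0 <= a by rewrite /a sumr_ge0 // => b _; rewrite mulr_ge0 ?nu_ge0 ?sqr_ge0.
have q0 : 0 <= q by rewrite /q sumr_ge0 // => b _; rewrite mulr_ge0 ?nu_ge0.
have he := abs_ee h s hh; rewrite -/q in he.
have ne0 := normr_ge0 (ee h s).
have e2 : ee h s ^+ 2 <= expR cc ^+ 2 * a.
  rewrite -real_normK ?num_real //.
  have ec0 := expR_ge0 cc.
  have : `|ee h s| ^+ 2 <= (expR cc * q) ^+ 2.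
    by rewrite ler_sqr // ?nnegrE // mulr_ge0.
  rewrite exprMn => h1; apply: (le_trans h1); rewrite ler_wpM2l // exprn_ge0 //.
have s1 : \sum_b nu h s b * xx h s b ^+ 2 <=
          \sum_b nu h s b * (2 * dd h s b ^+ 2 + 2 * ee h s ^+ 2).
  apply: ler_sum => b _; apply: ler_wpM2l; first exact: nu_ge0.
  rewrite xx_de; have := sqr_ge0 (dd h s b + ee h s); nra.
have s2 : \sum_b nu h s b * (2 * dd h s b ^+ 2 + 2 * ee h s ^+ 2) = 2 * a + 2 * ee h s ^+ 2.
  rewrite (eq_bigr (fun b => 2 * (nu h s b * dd h s b ^+ 2) + nu h s b * (2 * ee h s ^+ 2))).
    by rewrite big_split /= -mulr_sumr -mulr_suml (nu_sum h s hh) mul1r.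
  by move=> b _; ring.
have ec1 : 1 <= expR cc ^+ 2 by rewrite exprn_ege1 // ecc_ge1.
nra.
Qed.

Definition MM := \big[Num.max/0]_(l < H) E l (fun s b => `|gres H eta gamma P r pi Qt l s b| ^+ 2).

Lemma MM_ge l : (l < H)%N -> E l (fun s b => `|gres H eta gamma P r pi Qt l s b| ^+ 2) <= MM.
Proof.
move=> hl.
exact: (le_bigmax 0 (fun j : 'I_H => E j (fun s b => `|gres H eta gamma P r pi Qt j s b| ^+ 2))
   (Ordinal hl)).
Qed.

Lemma MM_ge0 : 0 <= MM.
Proof.
apply: (le_trans _ (MM_ge 0 HP)); apply: E_ge0 => // s b; exact: sqr_ge0.
Qed.

Lemma ww_ge0 : 0 <= ww.
Proof. by rewrite /ww mulr_ge0 ?expR_ge0. Qed.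

Lemma sum_pow_le (x : R) h : 0 <= x -> (h <= H)%N ->
  \sum_(h <= l < H) x ^+ (l - h) <= eff H x.
Proof.
move=> x0 hh; rewrite effE -(big_mkord xpredT (fun i => x ^+ i)).
rewrite -{1}[h]add0n big_addn.
rewrite (@big_cat_nat _ _ _ (H - h) 0 H) ?leq_subr //=.
have -> : \sum_(0 <= i < H - h | true) x ^+ (i + h - h) = \sum_(0 <= i < H - h) x ^+ i.
  by apply: eq_bigr => i _; rewrite addnK.
rewrite lerDl sumr_ge0 // => i _; exact: exprn_ge0.
Qed.

Lemma GH2_le h s b : (h < H)%N ->
  GH h s b ^+ 2 <= eff H ww *
    \sum_(h <= l < H) ww ^+ (l - h) * cs (l - h) h (fun s b => ag l s b ^+ 2) s b.
Proof.
move=> hh.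
have := @cs_ineq _ _ (index_iota h H) (fun l => ww ^+ (l - h))
   (fun l => cs (l - h) h (ag l) s b) (fun l => exprn_ge0 _ ww_ge0).
move=> h1; apply: (le_trans h1).
have s0 : 0 <= \sum_(h <= l < H) ww ^+ (l - h) * cs (l - h) h (ag l) s b ^+ 2.
  by rewrite sumr_ge0 // => l _; apply: mulr_ge0; [exact: exprn_ge0 ww_ge0 | exact: sqr_ge0].
apply: (le_trans (ler_wpM2r s0 (sum_pow_le ww h ww_ge0 (ltnW hh)))).
apply: ler_wpM2l; first exact: eff_ge0 ww ww_ge0.
rewrite big_nat_cond [X in _ <= X]big_nat_cond.
apply: ler_sum => l /andP[/andP[hl lH] _]; apply: ler_wpM2l; first exact: exprn_ge0 ww_ge0.
by apply: cs_jensen; lia.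
Qed.

Lemma Ed2_le h : (h < H)%N -> E h (fun s b => dd h s b ^+ 2) <= eff H ww ^+ 2 * MM.
Proof.
move=> hh; apply: le_trans.
  apply: (E_le h _ _ (ltnW hh)) => s b.
  apply: (le_trans _ (GH2_le h s b hh)).
  rewrite -real_normK ?num_real // ler_sqr ?nnegrE ?d_hat //.
  by apply: (le_trans (normr_ge0 _) (d_hat h s b hh)).
rewrite E_scale E_sum.
have ef0 := eff_ge0 ww ww_ge0.
rewrite expr2 -mulrA; apply: ler_wpM2l => //.
apply: (le_trans _ (ler_wpM2r MM_ge0 (sum_pow_le ww h ww_ge0 (ltnW hh)))).
rewrite mulr_suml big_nat_cond [X in _ <= X]big_nat_cond.
apply: ler_sum => l /andP[/andP[hl lH] _].
rewrite E_scale tower subnKC //; apply: ler_wpM2l; first exact: exprn_ge0 ww_ge0.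
exact: MM_ge.
Qed.

Lemma part2 : XX <= H%:R * (4 * expR cc ^+ 2 * (eff H ww ^+ 2 * MM)).
Proof.
rewrite /XX.
apply: le_trans.
  rewrite big_nat_cond; apply: ler_sum => h /andP[/andP[_ hh] _].
  apply: (@le_trans _ _ (4 * expR cc ^+ 2 * E h (fun s b => dd h s b ^+ 2))).
    rewrite /Esb mulr_sumr; apply: ler_sum => s _; rewrite mulrCA.
    by apply: ler_wpM2l; [exact: mu_ge0 (ltnW hh) | exact: x2_le].
  apply: ler_wpM2l; first by rewrite mulr_ge0 ?exprn_ge0 ?expR_ge0.
  exact: Ed2_le h hh.
rewrite -big_nat_cond sumr_const_nat subn0.
by rewrite (mulr_natl (4 * expR cc ^+ 2 * (eff H ww ^+ 2 * MM)) H).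
Qed.

Lemma eff_ge1 : 1 <= eff H gamma.
Proof.
rewrite effE; case: H HP => // n _.
by rewrite big_ord_recl expr0 lerDl sumr_ge0 // => i _; rewrite exprn_ge0.
Qed.

Lemma main_b0 :
  let lhs := \sum_(h < H) H%:R * Es H eta gamma P r pi rho h
                 (fun s => \sum_b `|nut H eta Qt h s b - nupi H eta gamma P r pi h s b|) in
  let D := \sum_(h < H) Esb H eta gamma P r pi rho h
                 (fun s b => `|Delta1 H eta gamma P r pi Qt h s b|) in
  lhs <= 2 * eta * H%:R * D + eta ^+ 2 * H%:R * (1 + 4 * eff H gamma) * expR (2 * eta * BA)
          * \sum_(h < H) Esb H eta gamma P r pi rho h
                 (fun s b => `|At H eta Qt h s b - Api H eta gamma P r pi h s b| ^+ 2)
  /\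
  lhs <= 2 * eta * H%:R * D + 2 * eta ^+ 2 * H%:R ^+ 2 * expR (6 * eta * BA)
            * (1 + 4 * eff H gamma)
            * (eff H (expR (2 * eta * BA) * gamma)) ^+ 2 * \big[Num.max/0]_(h < H) Esb H eta gamma P r pi rho h
                 (fun s b => `|gres H eta gamma P r pi Qt h s b| ^+ 2).
Proof.
move=> lhs D.
have eL : lhs = \sum_(0 <= h < H) H%:R * Es H eta gamma P r pi rho h
      (fun s => \sum_b `|nut H eta Qt h s b - nu h s b|) by rewrite /lhs big_mkord.
have eD : D = DD by rewrite /D /DD big_mkord.
have eX : \sum_(h < H) Esb H eta gamma P r pi rho h
     (fun s b => `|At H eta Qt h s b - Api H eta gamma P r pi h s b| ^+ 2) = XX.
  by rewrite /XX big_mkord; apply: eq_bigr => h _; rewrite /Esb; apply: eq_bigr => s _;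
    congr (_ * _); apply: eq_bigr => b _; rewrite real_normK ?num_real.
rewrite -/MM eX eD -/cc -/ww.
have p1 := part1; rewrite -eL in p1.
have D0 := DD_ge0; have X0 := XX_ge0; have M0 := MM_ge0.
have H0 : 0 <= H%:R :> R by rewrite ler0n.
have e0 := eff_ge0 gamma g0; have e1 := eff_ge1.
have ec0 : 0 <= expR cc := expR_ge0 _.
have E0 := eff_ge0 ww ww_ge0.
have et0 : 0 <= eta := ltW eta0.
have t1 : H%:R * eta * DD <= 2 * eta * H%:R * DD.
  rewrite -subr_ge0; have -> : 2 * eta * H%:R * DD - H%:R * eta * DD = H%:R * eta * DD by ring.
  by rewrite !mulr_ge0.
split.
  apply: (le_trans p1); apply: lerD => //.
  rewrite -subr_ge0.
  have -> : eta ^+ 2 * H%:R * (1 + 4 * eff H gamma) * expR cc * XX -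
     H%:R * eta ^+ 2 * expR cc * (1 + eff H gamma) * XX =
     (H%:R * eta ^+ 2 * expR cc * XX) * (3 * eff H gamma) by ring.
  by rewrite !mulr_ge0 ?exprn_ge0.
apply: (le_trans p1); apply: lerD => //.
have e6 : expR (6 * eta * BA) = expR cc ^+ 3.
  by rewrite -expRM_natl /cc; congr expR; ring.
rewrite e6.
have p2 := part2.
set Q := eta ^+ 2 * H%:R ^+ 2 * expR cc ^+ 3 * eff H ww ^+ 2 * MM.
have Q0 : 0 <= Q by rewrite /Q !mulr_ge0 ?exprn_ge0.
apply: (@le_trans _ _ (4 * (1 + eff H gamma) * Q)).
  have -> : 4 * (1 + eff H gamma) * Q = H%:R * eta ^+ 2 * expR cc * (1 + eff H gamma)
      * (H%:R * (4 * expR cc ^+ 2 * (eff H ww ^+ 2 * MM))) by rewrite /Q; ring.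
  apply: ler_wpM2l => //; by rewrite !mulr_ge0 ?exprn_ge0 // addr_ge0.
have -> : 2 * eta ^+ 2 * H%:R ^+ 2 * expR cc ^+ 3 * (1 + 4 * eff H gamma) * eff H ww ^+ 2 * MM
   = 2 * (1 + 4 * eff H gamma) * Q by rewrite /Q; ring.
apply: ler_wpM2r => //; lra.
Qed.

End Main.

Theorem mainTheorem4 (R : realType) (S A B : finType) (H : nat) (eta gamma : R)
  (P : nat -> S -> A -> B -> S -> R) (r : nat -> S -> A -> B -> R)
  (pi : nat -> S -> B -> A -> R) (rho : S -> R)
  (Qt : nat -> S -> B -> R) (BA : R) :
  0 < eta -> 0 <= gamma <= 1 ->
  (forall h s a b s', (h < H)%N -> 0 <= P h s a b s') ->
  (forall h s a b, (h < H)%N -> \sum_s' P h s a b s' = 1) ->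
  (forall h s a b, (h < H)%N -> 0 <= r h s a b <= 1) ->
  (forall h s b a, (h < H)%N -> 0 <= pi h s b a) ->
  (forall h s b, (h < H)%N -> \sum_a pi h s b a = 1) ->
  (forall s, 0 <= rho s) -> \sum_s rho s = 1 ->
  0 < BA ->
  (forall h s b, (h < H)%N ->
     [/\ `|Qpi H eta gamma P r pi h s b| <= BA,
         `|Vpi H eta gamma P r pi h s| <= BA &
         `|Api H eta gamma P r pi h s b| <= BA] /\
     [/\ `|Qt h s b| <= BA,
         `|Vt H eta Qt h s| <= BA &
         `|At H eta Qt h s b| <= BA]) ->
  let C0 := 2 * eta * H%:R in
  let C1 := eta ^+ 2 * H%:R * (1 + 4 * eff H gamma) * expR (2 * eta * BA) in
  let C2 := 2 * eta ^+ 2 * H%:R ^+ 2 * expR (6 * eta * BA) * (1 + 4 * eff H gamma)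
            * (eff H (expR (2 * eta * BA) * gamma)) ^+ 2 in
  let lhs := \sum_(h < H) H%:R * Es H eta gamma P r pi rho h
                 (fun s => \sum_b `|nut H eta Qt h s b - nupi H eta gamma P r pi h s b|) in
  let D := \sum_(h < H) Esb H eta gamma P r pi rho h
                 (fun s b => `|Delta1 H eta gamma P r pi Qt h s b|) in
  lhs <= C0 * D + C1 * \sum_(h < H) Esb H eta gamma P r pi rho h
                 (fun s b => `|At H eta Qt h s b - Api H eta gamma P r pi h s b| ^+ 2)
  /\
  lhs <= C0 * D + C2 * \big[Num.max/0]_(h < H) Esb H eta gamma P r pi rho h
                 (fun s b => `|gres H eta gamma P r pi Qt h s b| ^+ 2).
Proof.
move=> eta0 /andP[g0 g1] P0 P1 r01 pi0 pi1 rho0 rho1 BA0 hB C0 C1 C2 lhs D.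
case: (posnP H) => [H0|HP].
  subst H; rewrite /lhs /D !big_ord0 !mulr0 addr0; split; exact: lexx.
case: (pickP (@predT B)) => [b0 _|hB0]; last first.
  have sB0 : forall F : B -> R, \sum_b F b = 0.
    by move=> F; rewrite big_pred0 // => b; rewrite hB0.
  have E0 : forall h F, Esb H eta gamma P r pi rho h F = 0.
    by move=> h F; rewrite /Esb big1 // => s _; rewrite sB0 mulr0.
  have L0 : lhs = 0.
    by rewrite /lhs big1 // => h _; rewrite /Es big1 ?mulr0 // => s _; rewrite sB0 mulr0.
  have D0 : D = 0 by rewrite /D big1 // => h _; rewrite E0.
  rewrite L0 D0 mulr0 add0r.
  split; first by under eq_bigr => h _ do rewrite E0; rewrite big1_eq mulr0.
  rewrite add0r; under eq_bigr => h _ do rewrite E0.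
  rewrite (_ : \big[Num.max/0]_(h < H) (0 : R) = 0) ?mulr0 //.
  by apply: (big_ind (fun x : R => x = 0)) => // x y -> ->; exact: maxxx.
have hB' : forall h s b, (h < H)%N ->
     `|At H eta Qt h s b| <= BA /\ `|Api H eta gamma P r pi h s b| <= BA.
  by move=> h s b hh; have [[_ _ ?] [_ _ ?]] := hB h s b hh.
rewrite /lhs /D /C0 /C1 /C2.
exact: (@main_b0 R S A B H eta gamma P r pi rho Qt BA b0 eta0 g0 g1 P0 P1 pi0 pi1 rho0 (ltW BA0) HP hB').
Qed.
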